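(* For every $\alpha\in[3,\omega]$, the set $\mathsf{W}^N_3$ is first-order definable (without parameters) in the structure $(\mathsf{W}^N_\alpha,\prec,\Diamond_1,\Diamond_3)$.
   Context: Words are finite strings over $\mathbb{N}$; $\mathsf{W}_\omega$ is the set of all words, $\Lambda$ the empty word, $AB$ concatenation. For $k\in\mathbb{N}$, $\mathsf{S}_k$ is the set of words all of whose symbols are $\ge k$; for $\alpha\in\mathbb{N}\cup\{\omega\}$, $\mathsf{W}_\alpha$ is the set of words all of whose symbols are $\le\alpha$. Given a linear preorder $\precsim$ with $A\sim B$ iff $A\precsim B\wedge B\precsim A$ and $A\prec B$ iff $A\precsim B\wedge\neg B\precsim A$, a finite sequence $(A_1,\dots,A_p)$ is lexicographically not greater than $(B_1,\dots,B_q)$ iff either $p\le q$ and $A_i\sim B_i$ for all $i\le p$, or there is $s<\min(p,q)$ with $A_i\sim B_i$ for $i\le s$ and $A_{s+1}\prec B_{s+1}$. A lexicographically maximal subsequence of a finite sequence is a subsequence that is lexicographically not less than every subsequence. The linear preorder $\precsim$ on $\mathsf{W}_\omega$ is defined by recursion on (largest symbol of $AB$) $-$ (smallest symbol of $AB$): $\Lambda\precsim\Lambda$; if $AB$ is nonempty with minimal symbol $n$, write uniquely $A=A_1n\cdots nA_k$, $B=B_1n\cdots nB_l$ ($k,l\ge1$) with $A_i,B_j\in\mathsf{S}_{n+1}$ (possibly empty); let $C,D$ be lexicographically maximal subsequences of $(A_1,\dots,A_k)$, $(B_1,\dots,B_l)$; then $A\precsim B$ iff $C$ is lexicographically not greater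 than $D$. The set $\mathsf{NF}$: $\Lambda\in\mathsf{NF}$; a word with minimal symbol $n$, written $A_1n\cdots nA_k$ with $k\ge2$, $A_i\in\mathsf{S}_{n+1}$, is in $\mathsf{NF}$ iff $A_k\precsim\dots\precsim A_1$ and all $A_i\in\mathsf{NF}$. Every word is $\sim$-equivalent to exactly one word of $\mathsf{NF}$. For $A\in\mathsf{NF}$, $\Diamond_nA$ is the unique word of $\mathsf{NF}$ equivalent to $An$. $\mathsf{W}^N_\alpha=\mathsf{W}_\alpha\cap\mathsf{NF}$. *)

(* Defs.v *)
From mathcomp Require Import all_boot.
Set Implicit Arguments. Unset Strict Implicit. Unset Printing Implicit Defensive.

Definition word := seq nat.

(* Largest / smallest symbol of a word (0 / arbitrary for the empty word). *)
Definition maxsym (A : word) : nat := foldr maxn 0 A.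
Definition minsym (A : word) : nat := foldr minn (head 0 A) A.

(* [wsplit n A] = [:: A_1; ...; A_k] where A = A_1 n A_2 n ... n A_k. *)
Fixpoint wsplit (n : nat) (A : word) : seq word :=
  match A with
  | [::] => [:: [::]]
  | x :: s =>
      if x == n then [::] :: wsplit n s
      else match wsplit n s with
           | h :: t => (x :: h) :: t
           | [::] => [:: [:: x]]
           end
  end.

Fixpoint subseqs (T : Type) (s : seq T) : seq (seq T) :=
  match s with
  | [::] => [:: [::]]
  | x :: s' => let r := subseqs s' in map (cons x) r ++ r
  end.

Fixpoint lexle (T : Type) (le : T -> T -> bool) (s t : seq T) : bool :=
  match s, t with
  | [::], _ => true
  | _ :: _, [::] => false
  | x :: s', y :: t' =>
      if le x y && le y x then lexle le s' t'
      else le x y && ~~ le y x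
  end.

Definition lexmax (T : Type) (le : T -> T -> bool) (s C : seq T) : bool :=
  all (fun X => lexle le X C) (subseqs s).

(* The preorder on words, by recursion (with fuel) on max - min of AB. *)
Fixpoint wle_fuel (f : nat) (A B : word) : bool :=
  match f with
  | 0 => true
  | f'.+1 =>
      if A ++ B is [::] then true else
      let n := minsym (A ++ B) in
      let As := wsplit n A in
      let Bs := wsplit n B in
      let le := wle_fuel f' in
      has (fun C => lexmax le As C &&
             has (fun D => lexmax le Bs D && lexle le C D) (subseqs Bs))
          (subseqs As)
  end.

(* A ≾ B.  The fuel (max symbol of AB) + 1 exceeds max - min of AB. *)
Definition wle (A B : word) : bool := wle_fuel (maxsym (A ++ B)).+1 A B.
Definition wequiv (A B : word) : bool := wle A B && wle B A.
Definition wlt (A B : word) : bool := wle A B && ~~ wle B A.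

Fixpoint isNF_fuel (f : nat) (A : word) : bool :=
  match f with
  | 0 => A == [::]
  | f'.+1 =>
      if A is [::] then true else
      let As := wsplit (minsym A) A in
      sorted (fun X Y => wle Y X) As && all (isNF_fuel f') As
  end.
Definition isNF (A : word) : bool := isNF_fuel (size A).+1 A.

(* alpha ∈ N ∪ {ω}: [Some a] is a, [None] is ω.  W_alpha. *)
Definition inW (alpha : option nat) (A : word) : bool :=
  if alpha is Some a then all (fun x => x <= a) A else true.

Definition inWN (alpha : option nat) (A : word) : bool := inW alpha A && isNF A.

(* Graph of ◇_n: B = ◇_n A iff B ∈ NF and B ~ A n. *)
Definition diamond_graph (n : nat) (A B : word) : bool :=
  isNF B && wequiv B (rcons A n).

(* First-order formulas in the signature (≺, ◇_1, ◇_3), with the unary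
   functions represented by their graphs, plus equality.  Variables are nat. *)
Inductive form : Type :=
  | FLt  : nat -> nat -> form
  | FEq  : nat -> nat -> form
  | FD1  : nat -> nat -> form
  | FD3  : nat -> nat -> form
  | FNot : form -> form
  | FAnd : form -> form -> form
  | FEx  : nat -> form -> form.

Definition upd (e : nat -> word) (i : nat) (B : word) : nat -> word :=
  fun j => if j == i then B else e j.

Fixpoint sat (alpha : option nat) (e : nat -> word) (phi : form) : Prop :=
  match phi with
  | FLt i j => wlt (e i) (e j)
  | FEq i j => e i = e j
  | FD1 i j => diamond_graph 1 (e i) (e j)
  | FD3 i j => diamond_graph 3 (e i) (e j)
  | FNot p => ~ sat alpha e p
  | FAnd p q => sat alpha e p /\ sat alpha e q
  | FEx i p => exists B, inWN alpha B /\ sat alpha (upd e i B) p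
  end.

Definition fo_definable (alpha : option nat) (S : word -> Prop) : Prop :=
  exists phi : form, forall e : nat -> word,
    (forall i, inWN alpha (e i)) -> (sat alpha e phi <-> S (e 0)).

(* Main.v *)
Require Import Defs.
From mathcomp Require Import all_boot.
From mathcomp Require Import zify.
Set Implicit Arguments. Unset Strict Implicit. Unset Printing Implicit Defensive.

Section Lex.
Variable T : eqType.
Variable le : T -> T -> bool.

Fixpoint pw (s t : seq T) : bool :=
  match s, t with
  | [::], _ => true
  | _ :: _, [::] => false
  | x :: s', y :: t' => le x y && pw s' t'
  end.

Lemma pw_lexle s t : pw s t -> lexle le s t.
Proof.
elim: s t => [|x s IH] [|y t] //= /andP[-> H].
by case: (le y x) => /=; [apply: IH|].
Qed.

Lemma pw_nlexle s t : pw t s -> size t < size s -> ~~ lexle le s t.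
Proof.
elim: t s => [|y t IH] [|x s] //= /andP[-> H] Hs.
rewrite andbT; case: (le x y) => //=; exact: IH.
Qed.

Lemma pw_all s t : size s <= size t ->
  (forall x y, x \in s -> y \in t -> le x y) -> pw s t.
Proof.
elim: s t => [|x s IH] [|y t] //= Hs H.
rewrite H ?mem_head //=; apply: IH => // a b Ha Hb.
by apply: H; rewrite in_cons ?Ha ?Hb orbT.
Qed.

Lemma mem_subseqs_self (s : seq T) : s \in subseqs s.
Proof. elim: s => [|x s IH] //=; by rewrite mem_cat map_f. Qed.

Lemma nil_subseqs (s : seq T) : [::] \in subseqs s.
Proof. elim: s => [|x s IH] //=; by rewrite mem_cat IH orbT. Qed.

Lemma subseqs_sub (s C : seq T) : C \in subseqs s -> {subset C <= s} /\ size C <= size s.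
Proof.
elim: s C => [|x s IH] C /=; first by rewrite inE => /eqP ->.
rewrite mem_cat => /orP[/mapP[C' HC' ->]|HC].
  have [H1 H2] := IH _ HC'; split=> //.
  by move=> y; rewrite !in_cons => /orP[->//|/H1 ->]; rewrite orbT.
have [H1 H2] := IH _ HC; split; last by apply: leqW.
by move=> y /H1 Hy; rewrite in_cons Hy orbT.
Qed.

Lemma lexmax_full (s C : seq T) : lexmax le s C -> lexle le s C.
Proof. by move/allP; apply; apply: mem_subseqs_self. Qed.

Lemma lexle_nil_r (s : seq T) : lexle le s [::] -> s = [::].
Proof. by case: s. Qed.

Lemma lexmax_const (s : seq T) : (forall x y, x \in s -> y \in s -> le x y) -> lexmax le s s.
Proof.
move=> H; apply/allP => C /subseqs_sub [H1 H2].
apply: pw_lexle; apply: pw_all => // x y /H1; exact: H.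
Qed.

Variable X : pred T.
Hypothesis tot : forall x y, X x -> X y -> le x y || le y x.
Hypothesis tr : forall x y z, X x -> X y -> X z -> le x y -> le y z -> le x z.

Lemma le_refl x : X x -> le x x.
Proof. by move=> Hx; have := tot Hx Hx; rewrite orbb. Qed.

Lemma lexle_refl s : all X s -> lexle le s s.
Proof.
elim: s => [|x s IH] //= /andP[Hx Hs]; by rewrite le_refl //= IH.
Qed.

Lemma lexle_total s t : all X s -> all X t -> lexle le s t || lexle le t s.
Proof.
elim: s t => [|x s IH] [|y t] //= /andP[Hx Hs] /andP[Hy Ht].
have := tot Hx Hy.
case: (le x y); case: (le y x) => //= _; exact: IH.
Qed.

Lemma lexle_trans s t u : all X s -> all X t -> all X u ->
  lexle le s t -> lexle le t u -> lexle le s u.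
Proof.
elim: s t u => [|x s IH] [|y t] [|z u] //= /andP[Hx Hs] /andP[Hy Ht] /andP[Hz Hu].
have t1 := tr Hx Hy Hz; have t2 := tr Hz Hy Hx; have t3 := tr Hy Hz Hx.
have t4 := tr Hz Hx Hy; have t5 := tr Hx Hz Hy; have t6 := tr Hy Hx Hz.
have IH' := IH t u Hs Ht Hu.
move: t1 t2 t3 t4 t5 t6 IH'.
case: (le x y); case: (le y x); case: (le y z); case: (le z y);
case: (le x z); case: (le z x) => //=;
move=> t1 t2 t3 t4 t5 t6 IH'; intros.
all: try by apply: IH'.
all: (match goal with H : is_true true -> is_true true -> is_true false |- _ => discriminate (H isT isT) end).
Qed.

Lemma max_exists (U : eqType) (R : U -> U -> bool) (L : seq U) :
  L != [::] ->
  (forall x y, x \in L -> y \in L -> R x y || R y x) ->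
  (forall x y z, x \in L -> y \in L -> z \in L -> R x y -> R y z -> R x z) ->
  exists2 m, m \in L & forall y, y \in L -> R y m.
Proof.
elim: L => [|a L IH] // _ Htot Htr.
case: L IH Htot Htr => [|b L] IH Htot Htr.
  exists a; first exact: mem_head.
  by move=> y; rewrite inE => /eqP ->; have := Htot a a (mem_head _ _) (mem_head _ _); rewrite orbb.
have [m Hm Hmax] : exists2 m, m \in b :: L & forall y, y \in b :: L -> R y m.
  apply: IH => //.
    by move=> x y Hx Hy; apply: Htot; rewrite in_cons ?Hx ?Hy orbT.
  by move=> x y z Hx Hy Hz; apply: Htr; rewrite in_cons ?Hx ?Hy ?Hz orbT.
have Hma : m \in a :: b :: L by rewrite in_cons Hm orbT.
have Haa : a \in a :: b :: L by apply: mem_head.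
case/orP: (Htot a m Haa Hma) => Ham.
  exists m => // y; rewrite in_cons => /orP[/eqP -> //|]; exact: Hmax.
exists a => // y; rewrite in_cons => /orP[/eqP ->|Hy].
  by have := Htot a a Haa Haa; rewrite orbb.
apply: (Htr y m a) => //; last exact: Hmax.
by rewrite in_cons Hy orbT.
Qed.

Lemma subseqs_all (s C : seq T) : all X s -> C \in subseqs s -> all X C.
Proof. move=> /allP Hs /subseqs_sub [H _]; apply/allP => x /H; exact: Hs. Qed.

Lemma lexmax_exists s : all X s -> exists2 C, C \in subseqs s & lexmax le s C.
Proof.
move=> Hs.
have H1 : subseqs s != [::].
  by apply/eqP => E; have := nil_subseqs s; rewrite E.
have H2 : forall x y, x \in subseqs s -> y \in subseqs s -> lexle le x y || lexle le y x.
  move=> x y Hx Hy; apply: lexle_total; exact: subseqs_all Hs _.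
have H3 : forall x y z, x \in subseqs s -> y \in subseqs s -> z \in subseqs s ->
   lexle le x y -> lexle le y z -> lexle le x z.
  move=> x y z Hx Hy Hz; apply: lexle_trans; exact: subseqs_all Hs _.
have [C HC Hmax] := max_exists H1 H2 H3.
by exists C => //; apply/allP.
Qed.

Definition LE (s t : seq T) :=
  has (fun C => lexmax le s C &&
     has (fun D => lexmax le t D && lexle le C D) (subseqs t)) (subseqs s).

Lemma LE_spec s t C0 D0 : all X s -> all X t ->
  C0 \in subseqs s -> lexmax le s C0 -> D0 \in subseqs t -> lexmax le t D0 ->
  LE s t = lexle le C0 D0.
Proof.
move=> Hs Ht HC0 MC0 HD0 MD0.
have aC0 := subseqs_all Hs HC0; have aD0 := subseqs_all Ht HD0.
apply/idP/idP.
  case/hasP=> C HC /andP[MC /hasP[D HD /andP[MD HCD]]].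
  have aC := subseqs_all Hs HC; have aD := subseqs_all Ht HD.
  have h1 : lexle le C0 C by move/allP: MC; apply.
  have h2 : lexle le D D0 by move/allP: MD0; apply.
  apply: (lexle_trans aC0 aD aD0) => //; exact: (lexle_trans aC0 aC aD).
move=> H; apply/hasP; exists C0 => //; rewrite MC0 /=.
by apply/hasP; exists D0 => //; rewrite MD0.
Qed.

Lemma LE_total s t : all X s -> all X t -> LE s t || LE t s.
Proof.
move=> Hs Ht.
have [C HC MC] := lexmax_exists Hs; have [D HD MD] := lexmax_exists Ht.
rewrite (LE_spec Hs Ht HC MC HD MD) (LE_spec Ht Hs HD MD HC MC).
apply: lexle_total; exact: subseqs_all HC || exact: subseqs_all HD.
Qed.

Lemma LE_trans s t u : all X s -> all X t -> all X u -> LE s t -> LE t u -> LE s u.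
Proof.
move=> Hs Ht Hu.
have [C HC MC] := lexmax_exists Hs; have [D HD MD] := lexmax_exists Ht.
have [E HE ME] := lexmax_exists Hu.
rewrite (LE_spec Hs Ht HC MC HD MD) (LE_spec Ht Hu HD MD HE ME) (LE_spec Hs Hu HC MC HE ME).
apply: lexle_trans; [exact: subseqs_all HC|exact: subseqs_all HD|exact: subseqs_all HE].
Qed.

Lemma LE_single a b : X a -> X b -> LE [:: a] [:: b] = le a b.
Proof.
move=> Ha Hb.
have Hsa : all X [:: a] by rewrite /= Ha.
have Hsb : all X [:: b] by rewrite /= Hb.
have Ma : lexmax le [:: a] [:: a].
  by apply: lexmax_const => x y; rewrite !inE => /eqP -> /eqP ->; apply: le_refl.
have Mb : lexmax le [:: b] [:: b].
  by apply: lexmax_const => x y; rewrite !inE => /eqP -> /eqP ->; apply: le_refl.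
rewrite (LE_spec Hsa Hsb (mem_subseqs_self _) Ma (mem_subseqs_self _) Mb) /=.
by case: (le a b); case: (le b a).
Qed.

End Lex.

Lemma eq_lexle (T : eqType) (le1 le2 : T -> T -> bool) (L : seq T) s t :
  (forall x y, x \in L -> y \in L -> le1 x y = le2 x y) ->
  {subset s <= L} -> {subset t <= L} -> lexle le1 s t = lexle le2 s t.
Proof.
move=> H; elim: s t => [|x s IH] [|y t] //= Hs Ht.
have hx : x \in L by apply: Hs; apply: mem_head.
have hy : y \in L by apply: Ht; apply: mem_head.
rewrite !H // IH // => z Hz; [apply: Hs|apply: Ht]; by rewrite in_cons Hz orbT.
Qed.

Lemma eq_LE (T : eqType) (le1 le2 : T -> T -> bool) s t :
  (forall x y, x \in s ++ t -> y \in s ++ t -> le1 x y = le2 x y) ->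
  LE le1 s t = LE le2 s t.
Proof.
move=> H.
have sub1 : forall C, C \in subseqs s -> {subset C <= s ++ t}.
  by move=> C /subseqs_sub [H1 _] x /H1 Hx; rewrite mem_cat Hx.
have sub2 : forall C, C \in subseqs t -> {subset C <= s ++ t}.
  by move=> C /subseqs_sub [H1 _] x /H1 Hx; rewrite mem_cat Hx orbT.
have lm1 : forall C, C \in subseqs s -> lexmax le1 s C = lexmax le2 s C.
  move=> C HC; apply: eq_in_all => Y HY; apply: (eq_lexle H); [exact: sub1|exact: sub1].
have lm2 : forall C, C \in subseqs t -> lexmax le1 t C = lexmax le2 t C.
  move=> C HC; apply: eq_in_all => Y HY; apply: (eq_lexle H); [exact: sub2|exact: sub2].
apply: eq_in_has => C HC; rewrite lm1 //; congr (_ && _).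
apply: eq_in_has => D HD; rewrite lm2 //; congr (_ && _).
apply: (eq_lexle H); [exact: sub1|exact: sub2].
Qed.


Lemma wsplit_nil n (A : word) : wsplit n A != [::].
Proof. case: A => //= y s; case: (y == n) => //; by case: (wsplit n s). Qed.

Lemma wsplit_cons n y (s : word) : wsplit n (y :: s) =
  if y == n then [::] :: wsplit n s
  else (y :: head [::] (wsplit n s)) :: behead (wsplit n s).
Proof.
rewrite /=; case: (y == n) => //; have := wsplit_nil n s.
by case: (wsplit n s).
Qed.

Lemma mem_wsplit n (A P : word) x : P \in wsplit n A -> x \in P -> (x \in A) && (x != n).
Proof.
elim: A P => [|y s IH] P; first by rewrite inE => /eqP ->.
have K : (x \in s) && (x != n) -> (x \in y :: s) && (x != n).
  by case/andP => a b; rewrite in_cons a b orbT.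
rewrite wsplit_cons; case: ifP => Hy.
  rewrite in_cons => /orP[/eqP -> //|HP Hx].
  by apply: K; apply: IH Hx.
have hd : head [::] (wsplit n s) \in wsplit n s.
  by have := wsplit_nil n s; case: (wsplit n s) => // a l _; apply: mem_head.
rewrite in_cons => /orP[/eqP ->|HP].
  rewrite in_cons => /orP[/eqP ->|Hx]; first by rewrite mem_head Hy.
  by apply: K; apply: IH Hx.
have HP' : P \in wsplit n s.
  by move: HP; case: (wsplit n s) => //= a l Hl; rewrite in_cons Hl orbT.
move=> Hx; by apply: K; apply: IH Hx.
Qed.

Lemma size_piece n (A P : word) : P \in wsplit n A -> size P + count_mem n A <= size A.
Proof.
elim: A P => [|y s IH] P; first by rewrite inE => /eqP ->.
rewrite wsplit_cons /=; case: ifP => Hy.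
  rewrite in_cons => /orP[/eqP -> /=|HP].
    by rewrite add0n add1n ltnS; apply: count_size.
  by rewrite /= addnCA add1n ltnS; apply: IH.
have hd : head [::] (wsplit n s) \in wsplit n s.
  by have := wsplit_nil n s; case: (wsplit n s) => // a l _; apply: mem_head.
rewrite in_cons => /orP[/eqP -> /=|HP].
  by rewrite add0n addSn ltnS; apply: IH.
have HP' : P \in wsplit n s.
  by move: HP; case: (wsplit n s) => //= a l Hl; rewrite in_cons Hl orbT.
by rewrite /= add0n; apply: leqW; apply: IH.
Qed.

Lemma wsplit_notin n (A : word) : n \notin A -> wsplit n A = [:: A].
Proof.
elim: A => [|y s IH] //; rewrite in_cons negb_or => /andP[Hy Hs].
by rewrite wsplit_cons eq_sym (negbTE Hy) IH.
Qed.

Lemma size_wsplit n (A : word) : size (wsplit n A) = (count_mem n A).+1.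
Proof.
elim: A => [|y s IH] //; rewrite wsplit_cons /= eq_sym; case: ifP => _ /=.
  by rewrite IH.
by have := wsplit_nil n s; move: IH; case: (wsplit n s).
Qed.

Lemma foldr_minn_le d (l : seq nat) x : x \in d :: l -> foldr minn d l <= x.
Proof.
elim: l x => [|y l IH] x; first by rewrite inE => /eqP ->.
rewrite /= !in_cons => /or3P[/eqP ->|/eqP ->|Hx].
- apply: leq_trans (geq_minr _ _) _; apply: IH; exact: mem_head.
- exact: geq_minl.
- apply: leq_trans (geq_minr _ _) _; apply: IH; by rewrite in_cons Hx orbT.
Qed.

Lemma foldr_minn_mem d (l : seq nat) : foldr minn d l \in d :: l.
Proof.
elim: l => [|y l IH]; first by apply: mem_head.
rewrite /= /minn; case: ifP => _; first by rewrite !in_cons eqxx orbT.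
by move: IH; rewrite !in_cons => /orP[->|->]; rewrite ?orbT.
Qed.

Lemma minsym_le (A : word) x : x \in A -> minsym A <= x.
Proof. case: A => // y s Hx; apply: (@foldr_minn_le y (y :: s)); by rewrite in_cons Hx orbT. Qed.

Lemma minsym_mem (A : word) : A != [::] -> minsym A \in A.
Proof.
case: A => // y s _.
have := foldr_minn_mem y (y :: s); rewrite in_cons => /orP[/eqP E|] //.
by rewrite /minsym /= in E *; rewrite E mem_head.
Qed.

Lemma maxsym_ge (A : word) x : x \in A -> x <= maxsym A.
Proof.
elim: A => [|y s IH] //; rewrite in_cons /= => /orP[/eqP ->|/IH H].
  exact: leq_maxl.
apply: leq_trans H (leq_maxr _ _).
Qed.

Lemma maxsym_le (A : word) M : all (fun x => x <= M) A -> maxsym A <= M.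
Proof. elim: A => [|y s IH] //= /andP[H1 H2]; by rewrite geq_max H1 IH. Qed.

Lemma wle_fuel_S f A B : wle_fuel f.+1 A B =
  if A ++ B is [::] then true else
  LE (wle_fuel f) (wsplit (minsym (A ++ B)) A) (wsplit (minsym (A ++ B)) B).
Proof. by []. Qed.

Lemma wle_fuel_S' f A B : A ++ B != [::] -> wle_fuel f.+1 A B =
  LE (wle_fuel f) (wsplit (minsym (A ++ B)) A) (wsplit (minsym (A ++ B)) B).
Proof. by rewrite wle_fuel_S; case: (A ++ B). Qed.

Lemma piece_bounds (A B P : word) x : A ++ B != [::] ->
  P \in wsplit (minsym (A ++ B)) A ++ wsplit (minsym (A ++ B)) B -> x \in P ->
  minsym (A ++ B) < x /\ x <= maxsym (A ++ B).
Proof.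
move=> HAB HP Hx.
have [HxAB Hxn] : x \in A ++ B /\ x != minsym (A ++ B).
  move: HP; rewrite mem_cat => /orP[] HP.
    by case/andP: (mem_wsplit HP Hx) => H1 H2; rewrite mem_cat H1.
  by case/andP: (mem_wsplit HP Hx) => H1 H2; rewrite mem_cat H1 orbT.
split; last exact: maxsym_ge.
by rewrite ltn_neqAle eq_sym Hxn minsym_le.
Qed.

Lemma pieces_bounds (A B P Q : word) : A ++ B != [::] ->
  P \in wsplit (minsym (A ++ B)) A ++ wsplit (minsym (A ++ B)) B ->
  Q \in wsplit (minsym (A ++ B)) A ++ wsplit (minsym (A ++ B)) B ->
  P ++ Q != [::] ->
  [/\ minsym (A ++ B) < minsym (P ++ Q), minsym (P ++ Q) <= maxsym (P ++ Q)
    & maxsym (P ++ Q) <= maxsym (A ++ B)].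
Proof.
move=> HAB HP HQ HPQ.
have Hall : forall x, x \in P ++ Q -> minsym (A ++ B) < x /\ x <= maxsym (A ++ B).
  move=> x; rewrite mem_cat => /orP[] Hx; [exact: piece_bounds HP Hx|exact: piece_bounds HQ Hx].
have Hm := minsym_mem HPQ.
split.
- by case: (Hall _ Hm).
- exact: maxsym_ge.
- by apply: maxsym_le; apply/allP => x /Hall [].
Qed.

Definition ad f (A B : word) :=
  (A ++ B != [::]) ==> (maxsym (A ++ B) - minsym (A ++ B) < f).

Lemma fuel_eq f g A B : ad f A B -> ad g A B -> wle_fuel f A B = wle_fuel g A B.
Proof.
elim: f g A B => [|f IH] g A B.
  case E: (A ++ B) => [|a l]; last by rewrite /ad E.
  by case: g => //= g; rewrite E.
case E: (A ++ B) => [|a l].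
  by case: g => [|g] //= _ _; rewrite E.
rewrite /ad; have HAB : A ++ B != [::] by rewrite E.
rewrite HAB implyTb => Hf.
case: g => [|g]; first by rewrite ltn0.
move=> Hg; rewrite (wle_fuel_S' f) // (wle_fuel_S' g) //.
apply: eq_LE => P Q HP HQ.
apply: IH; apply/implyP => HPQ; have [h1 h2 h3] := pieces_bounds HAB HP HQ HPQ; lia.
Qed.

Lemma wle_rec A B : A ++ B != [::] ->
  wle A B = LE wle (wsplit (minsym (A ++ B)) A) (wsplit (minsym (A ++ B)) B).
Proof.
move=> HAB; rewrite /wle wle_fuel_S' //.
apply: eq_LE => P Q HP HQ; rewrite /wle; apply: fuel_eq; apply/implyP => HPQ;
 have [h1 h2 h3] := pieces_bounds HAB HP HQ HPQ; lia.
Qed.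

Lemma wle_nil : wle [::] [::].
Proof. by []. Qed.


Lemma all_pieces m (A : word) (Q : pred nat) :
  all (fun x => m <= x) A -> (forall x, x \in A -> m < x -> Q x) ->
  all (fun P => all Q P) (wsplit m A).
Proof.
move=> /allP HA HQ; apply/allP => P HP; apply/allP => x Hx.
case/andP: (mem_wsplit HP Hx) => H1 H2; apply: HQ => //.
by rewrite ltn_neqAle eq_sym H2 HA.
Qed.

Lemma Gen (X : pred word) m (A B : word) :
  (forall x y, X x -> X y -> wle x y || wle y x) ->
  (forall x y z, X x -> X y -> X z -> wle x y -> wle y z -> wle x z) ->
  (forall W, all (fun x => (m < x) && (x \in A ++ B)) W -> X W) ->
  all (fun x => m <= x) (A ++ B) ->
  wle A B = LE wle (wsplit m A) (wsplit m B).
Proof.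
move=> tot tr HX Hm.
case E: (A ++ B) => [|a l].
  have : nilp (A ++ B) by rewrite E.
  rewrite cat_nilp => /andP[/nilP EA /nilP EB].
  rewrite EA EB /= (LE_single tot tr) //; apply: HX => //.
have HAB : A ++ B != [::] by rewrite E.
have Hn : m <= minsym (A ++ B) by move/allP: Hm; apply; apply: minsym_mem.
case: (ltnP m (minsym (A ++ B))) => Hlt; last first.
  have -> : m = minsym (A ++ B) by apply/eqP; rewrite eqn_leq Hn Hlt.
  exact: wle_rec.
have HnA : m \notin A.
  apply/negP => H; have := minsym_le (x := m) (A := A ++ B); rewrite mem_cat H => /(_ isT); lia.
have HnB : m \notin B.
  apply/negP => H; have := minsym_le (x := m) (A := A ++ B); rewrite mem_cat H orbT => /(_ isT); lia.
rewrite !wsplit_notin // (LE_single tot tr) //; apply: HX; apply/allP => x Hx.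
- rewrite mem_cat Hx andbT; have := minsym_le (x := x) (A := A ++ B); rewrite mem_cat Hx; move/(_ isT); lia.
- rewrite mem_cat Hx orbT andbT; have := minsym_le (x := x) (A := A ++ B); rewrite mem_cat Hx orbT; move/(_ isT); lia.
Qed.

Definition SW M m (A : word) := all (fun x => m <= x) A && all (fun x => x <= M) A.
Definition Plev M m :=
  (forall A B, SW M m A -> SW M m B -> wle A B || wle B A) /\
  (forall A B C, SW M m A -> SW M m B -> SW M m C -> wle A B -> wle B C -> wle A C).

Lemma Plev_base M : Plev M M.+1.
Proof.
have H : forall A, SW M M.+1 A -> A = [::].
  case=> // x s /andP[/= /andP[H1 _] /andP[H2 _]]; lia.
by split=> [A B /H -> /H ->|A B C /H -> /H -> /H ->].
Qed.

Lemma pieces_SW M m A : SW M m A -> all (SW M m.+1) (wsplit m A).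
Proof.
case/andP=> /allP H1 /allP H2; apply/allP => P HP; apply/andP; split; apply/allP => x Hx;
  case/andP: (mem_wsplit HP Hx) => Hx1 Hx2.
  by rewrite ltn_neqAle eq_sym Hx2 H1.
exact: H2.
Qed.

Lemma Gen_SW M m A B : Plev M m.+1 -> SW M m A -> SW M m B ->
  wle A B = LE wle (wsplit m A) (wsplit m B).
Proof.
move=> [tot tr] HA HB; apply: (Gen tot tr).
  move=> W /allP HW; apply/andP; split; apply/allP => x /HW /andP[h1 h2] //.
  move: h2; rewrite mem_cat => /orP[] h2.
    by case/andP: HA => _ /allP; apply.
  by case/andP: HB => _ /allP; apply.
by rewrite all_cat; case/andP: HA => -> _; case/andP: HB => -> _.
Qed.

Lemma Plev_step M m : Plev M m.+1 -> Plev M m.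
Proof.
move=> HP; have [tot tr] := HP; split.
  move=> A B HA HB; rewrite !(Gen_SW HP) //.
  by apply: (LE_total tot tr); apply: pieces_SW.
move=> A B C HA HB HC; rewrite !(Gen_SW HP) //.
by apply: (LE_trans tot tr); apply: pieces_SW.
Qed.

Lemma Plev_all M k m : m + k = M.+1 -> Plev M m.
Proof.
elim: k m => [|k IH] m Hk; first by rewrite addn0 in Hk; rewrite Hk; apply: Plev_base.
apply: Plev_step; apply: IH; lia.
Qed.

Lemma SW0 (A : word) M : maxsym A <= M -> SW M 0 A.
Proof.
move=> H; apply/andP; split; apply/allP => x Hx //.
apply: leq_trans H; exact: maxsym_ge.
Qed.

Lemma wle_total A B : wle A B || wle B A.
Proof.
have [tot _] := @Plev_all (maxsym (A ++ B)) (maxsym (A ++ B)).+1 0 erefl.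
apply: tot; apply: SW0; apply: maxsym_le; apply/allP => x Hx; apply: maxsym_ge;
  by rewrite mem_cat Hx ?orbT.
Qed.

Lemma wle_trans A B C : wle A B -> wle B C -> wle A C.
Proof.
have [_ tr] := @Plev_all (maxsym (A ++ B ++ C)) (maxsym (A ++ B ++ C)).+1 0 erefl.
apply: tr; apply: SW0; apply: maxsym_le; apply/allP => x Hx; apply: maxsym_ge;
  by rewrite !mem_cat Hx ?orbT.
Qed.

Lemma wle_refl A : wle A A.
Proof. by have := wle_total A A; rewrite orbb. Qed.

Definition XT : pred word := fun _ => true.
Lemma totT : forall x y : word, XT x -> XT y -> wle x y || wle y x.
Proof. move=> x y _ _; exact: wle_total. Qed.
Lemma trT : forall x y z : word, XT x -> XT y -> XT z -> wle x y -> wle y z -> wle x z.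
Proof. move=> x y z _ _ _; exact: wle_trans. Qed.

Lemma wle_gen m (A B : word) : all (fun x => m <= x) (A ++ B) ->
  wle A B = LE wle (wsplit m A) (wsplit m B).
Proof. by apply: (Gen totT trT). Qed.

Lemma allT (s : seq word) : all XT s.
Proof. by elim: s. Qed.

Lemma wle_spec m (A B : word) C D : all (fun x => m <= x) (A ++ B) ->
  C \in subseqs (wsplit m A) -> lexmax wle (wsplit m A) C ->
  D \in subseqs (wsplit m B) -> lexmax wle (wsplit m B) D ->
  wle A B = lexle wle C D.
Proof.
move=> H HC MC HD MD; rewrite (wle_gen H).
exact: (LE_spec trT (allT _) (allT _) HC MC HD MD).
Qed.


Lemma ltrans (s t u : seq word) : lexle wle s t -> lexle wle t u -> lexle wle s u.
Proof. by apply: (lexle_trans trT); apply: allT. Qed.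

Lemma lmex (s : seq word) : exists2 C, C \in subseqs s & lexmax wle s C.
Proof. by apply: (lexmax_exists totT trT); apply: allT. Qed.

Lemma lm_nonnil (s C : seq word) : s != [::] -> lexmax wle s C -> C != [::].
Proof. by move=> Hs /lexmax_full; case: C => //; case: s Hs. Qed.

Lemma lm_single (x : word) : lexmax wle [:: x] [:: x].
Proof. by apply: lexmax_const => a b; rewrite !inE => /eqP -> /eqP ->; apply: wle_refl. Qed.

Lemma lm_nils k : lexmax wle (nseq k [::]) (nseq k [::]).
Proof. by apply: lexmax_const => a b; rewrite !mem_nseq => /andP[_ /eqP ->] /andP[_ /eqP ->]; apply: wle_refl. Qed.

Lemma piece_size n (A P : word) : n \in A -> P \in wsplit n A -> size P < size A.
Proof.
move=> Hn HP; have h1 := size_piece HP.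
have h2 : 0 < count_mem n A by rewrite -has_count; apply/hasP; exists n => //; rewrite /= eqxx.
move: h1 h2; move: (count _ A) => c; lia.
Qed.

Lemma wsplit_size2 n (A : word) : n \in A -> 1 < size (wsplit n A).
Proof.
move=> Hn; rewrite size_wsplit ltnS -has_count; by apply/hasP; exists n => //; rewrite /= eqxx.
Qed.

Lemma all_ge_minsym (A : word) : all (fun x => minsym A <= x) A.
Proof. by apply/allP => x; apply: minsym_le. Qed.

Lemma strong_ind (P : word -> Prop) :
  (forall w, (forall v, size v < size w -> P v) -> P w) -> forall w, P w.
Proof.
move=> H w; have [k Hk] : exists k, size w < k by exists (size w).+1.
elim: k w Hk => [|k IH] w Hk //; apply: H => v Hv; apply: IH; lia.
Qed.

Lemma L0 (w : word) : wle [::] w.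
Proof.
elim/strong_ind: w => w IH.
case Ew: w => [|a l]; first exact: wle_refl.
rewrite -Ew.
have Hw : w != [::] by rewrite Ew.
have Hm : minsym w \in w := minsym_mem Hw.
have [D HD MD] := lmex (wsplit (minsym w) w).
rewrite (wle_spec (m := minsym w) (C := [:: [::]]) (D := D)) //.
- have := lm_nonnil (wsplit_nil _ _) MD; case: D HD MD => // d r HD MD _.
  apply: pw_lexle => /=; rewrite andbT; apply: IH.
  have [sub _] := subseqs_sub HD.
  apply: (piece_size Hm); apply: sub; exact: mem_head.
all: try exact: all_ge_minsym.
all: try exact: mem_subseqs_self.
all: try exact: lm_single.
Qed.

Lemma L0s (w : word) : w != [::] -> ~~ wle w [::].
Proof.
move=> Hw.
have Hm : minsym w \in w := minsym_mem Hw.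
have [D HD MD] := lmex (wsplit (minsym w) w).
rewrite (wle_spec (m := minsym w) (C := D) (D := [:: [::]])) //; last first.
  by rewrite cats0; exact: all_ge_minsym.
apply/negP => H.
have := ltrans (lexmax_full MD) H.
apply/negP; apply: pw_nlexle; last exact: wsplit_size2.
by apply: pw_all; [apply: ltnW; exact: wsplit_size2 Hm| move=> x y; rewrite inE => /eqP ->; rewrite L0].
Qed.

Lemma Up (w X : word) : w != [::] -> all (fun x => minsym w < x) X ->
  (forall p, p \in wsplit (minsym w) w -> wle p X && ~~ wle X p) ->
  wle w X && ~~ wle X w.
Proof.
move=> Hw HX Hp.
have Hm : minsym w \in w := minsym_mem Hw.
have HmX : minsym w \notin X.
  by apply/negP => /(allP HX); rewrite ltnn.
have HX' : all (fun x => minsym w <= x) X by apply/allP => x /(allP HX) /ltnW.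
have [D HD MD] := lmex (wsplit (minsym w) w).
have := lm_nonnil (wsplit_nil _ _) MD; case: D HD MD => // d r HD MD _.
have [sub _] := subseqs_sub HD.
have /andP[h1 h2] := Hp _ (sub _ (mem_head _ _)).
have side : forall (Z : Prop), Z -> Z by [].
rewrite (wle_spec (m := minsym w) (C := d :: r) (D := [:: X])) //;
 try by (rewrite ?wsplit_notin //; (exact: lm_single || exact: mem_subseqs_self || by rewrite all_cat all_ge_minsym ?HX')).
rewrite (wle_spec (m := minsym w) (C := [:: X]) (D := d :: r)) //;
 try by (rewrite ?wsplit_notin //; (exact: lm_single || exact: mem_subseqs_self || by rewrite all_cat all_ge_minsym ?HX')).
by rewrite /= h1 (negbTE h2).
Qed.

Definition W3 (A : word) := all (fun x => x <= 3) A.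

Lemma W3_piece n (A P : word) : W3 A -> P \in wsplit n A -> W3 P.
Proof.
move=> /allP HA HP; apply/allP => x Hx; apply: HA.
by case/andP: (mem_wsplit HP Hx).
Qed.

Lemma L1 (w : word) : W3 w -> wle w [:: 4] && ~~ wle [:: 4] w.
Proof.
elim/strong_ind: w => w IH Hw3.
case Ew: w => [|a l].
  by rewrite L0 L0s.
rewrite -Ew; have Hw : w != [::] by rewrite Ew.
have Hm : minsym w \in w := minsym_mem Hw.
apply: Up => //.
  by rewrite /= andbT; have := allP Hw3 _ Hm; lia.
move=> p Hp; apply: IH; [exact: piece_size Hm Hp|exact: W3_piece Hw3 Hp].
Qed.

Lemma wsplit_nseq n k : wsplit n (nseq k n) = nseq k.+1 [::].
Proof. by elim: k => [|k IH] //; rewrite /= eqxx IH. Qed.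

Lemma L43 i j : i < j -> wle (nseq i 3) (nseq j 3) && ~~ wle (nseq j 3) (nseq i 3).
Proof.
move=> Hij.
have Hall : forall a b, all (fun x => 3 <= x) (nseq a 3 ++ nseq b 3).
  by move=> a b; rewrite all_cat !all_nseq leqnn !orbT.
have E : forall a b, wle (nseq a 3) (nseq b 3) = lexle wle (nseq a.+1 [::]) (nseq b.+1 [::]).
  move=> a b.
  have := @wle_spec 3 (nseq a 3) (nseq b 3) (nseq a.+1 [::]) (nseq b.+1 [::]) (Hall a b).
  rewrite !wsplit_nseq; apply; (exact: mem_subseqs_self || exact: lm_nils).
rewrite !E.
have Hpw : forall a b, a <= b -> pw wle (nseq a [::]) (nseq b [::]).
  move=> a b Hab; apply: pw_all; first by rewrite !size_nseq.
  by move=> x y; rewrite !mem_nseq => /andP[_ /eqP ->] /andP[_ /eqP ->]; apply: wle_refl.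
rewrite pw_lexle /=; last by apply: Hpw; apply: ltnW.
apply: pw_nlexle; first by apply: Hpw; apply: ltnW.
by rewrite !size_nseq.
Qed.

Lemma L4 (w : word) j : W3 w -> size w < j -> wle w (nseq j 3) && ~~ wle (nseq j 3) w.
Proof.
elim/strong_ind: w => w IH Hw3 Hj.
case: (boolP (all (pred1 3) w)) => [/all_pred1P Ew|Hn].
  by rewrite Ew; apply: L43.
have Hw : w != [::] by case: w Hn {IH Hw3 Hj}.
have Hm : minsym w \in w := minsym_mem Hw.
have Hlt : minsym w < 3.
  case/allPn: Hn => x Hx Hx3; have := minsym_le Hx; have := allP Hw3 _ Hx.
  move: Hx3; rewrite /= => Hx3; have : x != 3 by []; lia.
apply: Up => //.
  by rewrite all_nseq Hlt orbT.
move=> p Hp; apply: IH; [exact: piece_size Hm Hp|exact: W3_piece Hw3 Hp|].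
have := piece_size Hm Hp; lia.
Qed.

Lemma isNF_fuel_eq f g (A : word) : size A < f -> size A < g -> isNF_fuel f A = isNF_fuel g A.
Proof.
elim: f g A => [|f IH] [|g] A //; case: A => [|a l] //= Hf Hg.
congr (_ && _); apply: eq_in_all => P HP.
have Hsz := piece_size (minsym_mem (A := a :: l) isT) HP.
apply: IH; rewrite /= in Hsz; lia.
Qed.

Lemma isNF_fuel_S f (A : word) : isNF_fuel f.+1 A = if A is [::] then true else
  sorted (fun X Y => wle Y X) (wsplit (minsym A) A) && all (isNF_fuel f) (wsplit (minsym A) A).
Proof. by []. Qed.

Lemma isNF_unfold (A : word) : A != [::] -> isNF A =
  sorted (fun X Y => wle Y X) (wsplit (minsym A) A) && all isNF (wsplit (minsym A) A).
Proof.
case: A => [|a l] // _; rewrite {1}/isNF isNF_fuel_S; congr (_ && _).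
apply: eq_in_all => P HP.
have Hsz := piece_size (minsym_mem (A := a :: l) isT) HP.
rewrite /isNF; apply: isNF_fuel_eq; rewrite /= in Hsz *; lia.
Qed.

Lemma piece_of n (A : word) x : x \in A -> x != n -> exists2 P, P \in wsplit n A & x \in P.
Proof.
elim: A => [|y s IH] //; rewrite in_cons wsplit_cons => /orP[/eqP Exy|Hx] Hxn.
  subst y; rewrite (negbTE Hxn) /=; exists (x :: head [::] (wsplit n s)); by rewrite mem_head.
have [P HP HxP] := IH Hx Hxn.
case: ifP => Hy.
  by exists P => //; rewrite in_cons HP orbT.
move: HP; have := wsplit_nil n s; case: (wsplit n s) => // h t _.
rewrite in_cons => /orP[/eqP EP|HP].
  by exists (y :: h); rewrite ?mem_head // in_cons -EP HxP orbT.
by exists P => //=; rewrite in_cons HP orbT.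
Qed.

Lemma L2 (z : word) : isNF z -> has (fun x => 3 < x) z -> wle [:: 4] z.
Proof.
elim/strong_ind: z => z IH Hnf Hh.
have Hz : z != [::] by move: Hh; case: (z).
have Hm := minsym_mem Hz.
case: (ltnP (minsym z) 4) => Hm4.
  have Hn4 : minsym z \notin [:: 4] by rewrite inE; apply/eqP => E; rewrite E in Hm4.
  have [D HD MD] := lmex (wsplit (minsym z) z).
  have Hal : all (fun x => minsym z <= x) ([:: 4] ++ z) by rewrite /= all_ge_minsym andbT; apply: ltnW.
  rewrite (wle_spec (m := minsym z) (C := [:: [:: 4]]) (D := D) Hal); last exact: MD; last exact: HD;
    last (by rewrite wsplit_notin //; apply: lm_single);
    last (by rewrite wsplit_notin //; apply: mem_subseqs_self).
  apply: ltrans (lexmax_full MD).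
  move: Hnf; rewrite (isNF_unfold Hz) => /andP[Hs Hall].
  case/hasP: Hh => x Hx Hx3.
  have Hxm : x != minsym z by apply/eqP => E; rewrite -E in Hm4; move: Hx3 Hm4; lia.
  have [q Hq Hxq] := piece_of Hx Hxm.
  have Hq4 : wle [:: 4] q.
    apply: IH; [exact: piece_size Hm Hq|exact: (allP Hall q Hq)|by apply/hasP; exists x].
  move: Hs Hq; have := wsplit_nil (minsym z) z; case: (wsplit (minsym z) z) => // p1 rest _ Hs Hq.
  have Hp1 : wle [:: 4] p1.
    move: Hq; rewrite in_cons => /orP[/eqP <- //|Hq].
    have Htr : transitive (fun X Y : word => wle Y X).
      move=> b a c Hab Hbc; exact: wle_trans Hbc Hab.
    have := order_path_min Htr Hs; move/allP => /(_ q Hq) Hqp1.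
    exact: wle_trans Hq4 Hqp1.
  by rewrite /= Hp1 /=; case: (wle p1 [:: 4]).
have Hall4 : all (fun x => 4 <= x) ([:: 4] ++ z).
  by rewrite /=; apply/allP => x /minsym_le; apply: leq_trans.
have [D HD MD] := lmex (wsplit 4 z).
rewrite (wle_spec (m := 4) (C := nseq 2 [::]) (D := D) Hall4); last exact: MD; last exact: HD;
  last exact: (lm_nils 2); last exact: (mem_subseqs_self (nseq 2 ([::] : word))).
apply: ltrans (lexmax_full MD).
case: (boolP (4 \in z)) => H4.
  apply: pw_lexle; apply: pw_all; first exact: wsplit_size2 H4.
  by move=> x y; rewrite mem_nseq => /andP[_ /eqP ->] _; apply: L0.
by rewrite wsplit_notin //= L0 (negbTE (L0s Hz)).
Qed.

Lemma notW3 (z : word) : ~~ W3 z -> has (fun x => 3 < x) z.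
Proof. by rewrite /W3 -has_predC; apply: sub_has => x /=; rewrite -ltnNge. Qed.

Lemma L2' (w z : word) : W3 w -> isNF z -> ~~ W3 z -> wle w z && ~~ wle z w.
Proof.
move=> Hw Hz /notW3 Hh; have /andP[h1 h2] := L1 Hw; have h3 := L2 Hz Hh.
rewrite (wle_trans h1 h3) /=; apply/negP => h4; move/negP: h2; apply.
exact: wle_trans h3 h4.
Qed.

Lemma L3 (c : word) : c != [::] -> W3 c -> exists j,
  (wle (nseq j 3) c && ~~ wle c (nseq j 3)) /\ ~~ (wle (nseq j.+1 3) c && ~~ wle c (nseq j.+1 3)).
Proof.
move=> Hc Hw.
have ex : exists j, wle (nseq j 3) c && ~~ wle c (nseq j 3) by exists 0; rewrite /= L0 L0s.
have bnd : forall j, wle (nseq j 3) c && ~~ wle c (nseq j 3) -> j <= size c.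
  move=> j /andP[_ H]; rewrite leqNgt; apply/negP => Hj.
  by have /andP[H' _] := L4 Hw Hj; rewrite H' in H.
case: (ex_maxnP ex bnd) => j Hj Hmax; exists j; split => //.
by apply/negP => /Hmax; rewrite ltnn.
Qed.

Lemma rcons_nseq3 j : rcons (nseq j 3) 3 = nseq j.+1 3.
Proof. by elim: j => [|j IH] //=; rewrite IH. Qed.

Lemma sorted_nils k : sorted (fun X Y : word => wle Y X) (nseq k [::]).
Proof. by case: k => [|k] //=; elim: k => [|k IH] //=; rewrite wle_refl. Qed.

Lemma isNF_nseq3 k : isNF (nseq k 3).
Proof.
case: k => [|k] //; rewrite isNF_unfold //.
have Hm : minsym (nseq k.+1 3) = 3.
  by have := minsym_mem (A := nseq k.+1 3) isT; rewrite mem_nseq => /andP[_ /eqP].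
rewrite Hm wsplit_nseq sorted_nils /=; by rewrite all_nseq orbT.
Qed.

Lemma isNF4 : isNF [:: 4].
Proof. by vm_compute. Qed.


Definition Clo := FNot (FEx 3 (FEx 4 (FAnd (FLt 3 1) (FAnd (FD3 3 4) (FNot (FLt 4 1)))))).
Definition phi := FNot (FEx 1 (FAnd Clo (FAnd (FEx 2 (FLt 2 1)) (FNot (FLt 0 1))))).

Lemma sat_phi alpha e : sat alpha e phi <->
  ~ (exists c, inWN alpha c /\
       (~ exists y, inWN alpha y /\ exists z, inWN alpha z /\
            (wlt y c /\ (diamond_graph 3 y z /\ ~ wlt z c))) /\
       ((exists x, inWN alpha x /\ wlt x c) /\ ~ wlt (e 0) c)).
Proof. by rewrite /phi /Clo /= /upd /=. Qed.

Lemma inWN_nseq3 alpha j : (if alpha is Some a then 3 <= a else true) -> inWN alpha (nseq j 3).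
Proof.
move=> h3; rewrite /inWN isNF_nseq3 andbT /inW; case: alpha h3 => // a h3.
by rewrite all_nseq h3 orbT.
Qed.

Lemma wlt_nil_l (c : word) : wlt c [::] -> False.
Proof. by rewrite /wlt L0 andbF. Qed.

Unset Implicit Arguments.
Theorem lemma5 (alpha : option nat) (h3 : if alpha is Some a then 3 <= a else true) :
  fo_definable alpha (fun A => inWN (Some 3) A).
Proof.
exists phi => e He; rewrite sat_phi.
have /andP[_ Hnf0] := He 0.
split.
-
  move=> Hphi; rewrite /inWN Hnf0 andbT /inW.
  case: (boolP (W3 (e 0))) => // HW.
  have H4 : inWN alpha [:: 4].
    rewrite /inWN isNF4 andbT /inW; case: alpha h3 He Hphi => // a h3 He Hphi.
    case: (ltngtP a 3) => Ha; first by move: h3; lia.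
      by rewrite /= Ha.
    by subst a; have /andP[Hi _] := He 0; rewrite /inW in Hi; rewrite /W3 Hi in HW.
  exfalso; apply: Hphi; exists [:: 4]; split => //; split.
    case=> y [Hy [z [Hz [Hyc [HD Hzc]]]]].
    have Wy : W3 y.
      apply/negPn/negP => Wy; have := L2 (andP Hy).2 (notW3 Wy).
      by case/andP: Hyc => _ /negP.
    have Wy3 : W3 (rcons y 3) by rewrite /W3 all_rcons leqnn.
    case/andP: HD => Hznf /andP[Hz1 _].
    have Wz : W3 z.
      apply/negPn/negP => Wz; have /andP[_ h] := L2' Wy3 Hznf Wz.
      by rewrite Hz1 in h.
    by apply: Hzc; apply: L1.
  split; first by exists [::]; split; [rewrite /inWN /inW; case: (alpha)|rewrite /wlt L0 L0s].
  by rewrite /wlt (L2 Hnf0 (notW3 HW)) andbF.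
-
  case/andP => HW0 _ [c [Hc [Hclo [[x2 [_ Hx2]] Hn]]]].
  apply: Hn.
  case: (boolP (W3 c)) => Wc; last exact: L2' HW0 (andP Hc).2 Wc.
  have Hc0 : c != [::] by apply/eqP => E; rewrite E in Hx2; exact: wlt_nil_l Hx2.
  have [j [Hj1 Hj2]] := L3 Hc0 Wc.
  exfalso; apply: Hclo; exists (nseq j 3); split; first exact: inWN_nseq3.
  exists (nseq j.+1 3); split; first exact: inWN_nseq3.
  split => //; split; last by move=> H; move/negP: Hj2; apply.
  by rewrite /diamond_graph isNF_nseq3 rcons_nseq3 /wequiv wle_refl.
Qed.
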